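(* Let $p$ be a prime and let $\Lambda$ be a finite, simple, connected graph with at least $3$ vertices such that $|\mathrm{V}(\Lambda)|$ and $|\mathrm{E}(\Lambda)|$ are both powers of $p$. Let $G\le\mathrm{Aut}(\Lambda)$ be transitive on both $\mathrm{V}(\Lambda)$ and $\mathrm{E}(\Lambda)$. Then $G$ contains an element which acts semiregularly on each of $\mathrm{V}(\Lambda)$ and $\mathrm{E}(\Lambda)$.
   Context: A non-identity element $g$ acts semiregularly on a set if the cyclic group $\langle g\rangle$ acts on it with all point stabilisers trivial. *)

(* Defs.v *)
From mathcomp Require Import all_boot all_order all_fingroup.
Set Implicit Arguments. Unset Strict Implicit. Unset Printing Implicit Defensive.
Local Open Scope group_scope.

Definition simple_graph (V : finType) (e : rel V) : Prop :=
  symmetric e /\ irreflexive e.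

Definition connected_graph (V : finType) (e : rel V) : Prop :=
  forall x y : V, connect e x y.

Definition edges (V : finType) (e : rel V) : {set {set V}} :=
  [set A : {set V} | [exists x, exists y, e x y && (A == [set x; y])]].

Definition is_graph_aut (V : finType) (e : rel V) (g : {perm V}) : bool :=
  [forall x, forall y, e (g x) (g y) == e x y].

Definition is_power_of (p n : nat) : Prop := exists k, n = (p ^ k)%N.

Definition semiregular_elt (aT : finGroupType) (D : {group aT}) (T : finType)
  (to : action D T) (g : aT) (S : {set T}) : Prop :=
  g != 1 /\ forall x, x \in S -> 'C_<[g]>[x | to] = 1.

(* Main.v *)
Require Import Defs.
From mathcomp Require Import all_boot all_order all_fingroup all_solvable.
Local Open Scope group_scope.

Section Gen.
Variables (aT : finGroupType) (rT : finType) (to : {action aT &-> rT}).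

Lemma sylow_trans p (G P : {group aT}) (S : {set rT}) :
  [transitive G, on S | to] -> p.-Sylow(G) P -> p.-nat #|S| ->
  [transitive P, on S | to].
Proof.
move=> trG sylP pS.
have [x Sx _] := imsetP trG.
have sPG := pHall_sub sylP.
apply/(subgroup_transitivePin Sx sPG (subsetT _) trG).
set K := 'C_G[x | to].
have sKG : K \subset G by apply: subsetIl.
apply/eqP; rewrite eqEcard mul_subG //=.
have oS : #|S| = #|G : K| by rewrite -(atransPin (subsetT _) trG Sx) card_orbit_in ?subsetT.
have oP : #|P| = (#|K|`_p * #|S|)%N.
  rewrite (card_Hall sylP) -(Lagrange sKG) partnM ?cardG_gt0 ?indexg_gt0 //.
  by rewrite -oS (part_pnat_id pS).
have dKP : #|K :&: P| %| #|K|`_p.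
  rewrite -(part_pnat_id (pgroupS (subsetIr K P) (pHall_pgroup sylP))).
  by apply: partn_dvd; rewrite ?cardG_gt0 ?cardSg ?subsetIl.
have le1 : #|K :&: P| <= #|K|`_p by apply: dvdn_leq; rewrite ?part_gt0.
have oG : #|G| = (#|K| * #|S|)%N by rewrite oS Lagrange.
have E : (#|G| * #|K|`_p)%N = (#|(K * P)%g| * #|K :&: P|)%N.
  by rewrite -mul_cardG oP oG -mulnA (mulnC #|S|).
have : (#|G| * #|K :&: P| <= #|(K * P)%g| * #|K :&: P|)%N.
  by rewrite -E leq_mul2l le1 orbT.
by rewrite leq_pmul2r // (cardG_gt0 [group of K :&: P]).
Qed.

Lemma fix_all (P : {group aT}) (S : {set rT}) z x :
  [transitive P, on S | to] -> z \in 'Z(P) -> x \in S -> to x z = x ->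
  forall y, y \in S -> to y z = y.
Proof.
move=> trP /centerP[Pz cz] Sx fx y Sy.
have [h Ph ->] := atransP2 trP Sx Sy.
by rewrite -actM -(cz h Ph) actM fx.
Qed.

Lemma stab_prime z x : prime #[z] -> to x z != x -> 'C_<[z]>[x | to] = 1.
Proof.
move=> pz nfx; apply/eqP; rewrite trivg_card1.
have : #|'C_<[z]>[x | to]| %| #[z] by apply: cardSg; apply: subsetIl.
case/primeP: pz => _ /[apply] /orP[] // /eqP H.
have : 'C_<[z]>[x | to] = <[z]>.
  by apply/eqP; rewrite eqEcard subsetIl H leqnn.
move=> E; have : z \in 'C_<[z]>[x | to] by rewrite E cycle_id.
by case/setIP=> _ /astab1P fx; rewrite fx eqxx in nfx.
Qed.
End Gen.
Arguments sylow_trans {aT rT to p G P S}.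
Arguments fix_all {aT rT to P S z x}.
Arguments stab_prime {aT rT to z x}.

Theorem corollary2p13 (p : nat) (V : finType) (e : rel V) (G : {group {perm V}}) :
  prime p ->
  simple_graph e ->
  connected_graph e ->
  3 <= #|V| ->
  is_power_of p #|V| ->
  is_power_of p #|edges e| ->
  (forall g, g \in G -> is_graph_aut e g) ->
  [transitive G, on [set: V] | 'P] ->
  [transitive G, on edges e | 'P^*] ->
  exists2 g, g \in G &
    semiregular_elt 'P g [set: V] /\ semiregular_elt 'P^* g (edges e).
Proof.
move=> pr_p [esym eirr] conn V3 [a oV] [b oE] autG trV trE.
have pn : forall k, p.-nat (p ^ k)%N by move=> k; rewrite pnatX pnat_id.
have [P sylP] := Sylow_exists p G.
have pV : p.-nat #|[set: V]| by rewrite cardsT oV pn.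
have pE : p.-nat #|edges e| by rewrite oE pn.
have trPV := sylow_trans trV sylP pV.
have trPE := sylow_trans trE sylP pE.
have pP := pHall_pgroup sylP.
have [x0 _] : exists x0 : V, x0 \in V by apply/card_gt0P; apply: leq_trans V3.
have ntZ : 'Z(P) != 1.
  apply/eqP => Z1; have P1 := trivg_center_pgroup pP Z1.
  have := dvdn_orbit 'P P x0.
  rewrite (atransP trPV _ (in_setT x0)) cardsT P1 cards1 dvdn1 => /eqP V1.
  by rewrite V1 in V3.
have [_ pZ _] := pgroup_pdiv (pgroupS (center_sub P) pP) ntZ.
have [z Zz oz] := Cauchy pr_p pZ.
have zG : z \in G.
  by apply: (subsetP (pHall_sub sylP)); apply: (subsetP (center_sub P)).
have pz : prime #[z] by rewrite oz.
have nz : z != 1.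
  by apply/eqP => z1; move: pr_p; rewrite -oz z1 order1.
have nfV : forall v, 'P%act v z != v.
  move=> v; apply/eqP=> fv; have allf := fix_all trPV Zz (in_setT v) fv.
  move/eqP: nz; apply; apply/permP => y.
  by rewrite perm1 -apermE (allf y (in_setT y)).
have zfix : forall A, A \in edges e -> 'P^*%act A z != A.
  move=> A EA; apply/eqP=> fA; have allf := fix_all trPE Zz EA fA.
  have sw : forall x y, e x y -> z x = y.
    move=> x y exy.
    have Exy : [set x; y] \in edges e.
      by rewrite inE; apply/existsP; exists x; apply/existsP; exists y; rewrite exy eqxx.
    have := allf _ Exy; rewrite /= setactE => E'.
    have : aperm x z \in [set x; y] by rewrite -E'; apply: imset_f; rewrite set21.
    rewrite apermE !inE => /orP[/eqP zx|/eqP //].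
    by have := nfV x; rewrite /= apermE zx eqxx.
  pose B := [set x0; z x0].
  have cl1 : forall u w, e u w -> u \in B -> w \in B.
    move=> u w euw; rewrite /B !inE => /orP[/eqP uE|/eqP uz].
      by rewrite -(sw _ _ euw) uE eqxx orbT.
    have : z w = z x0 by rewrite (sw w u) // esym.
    by move/perm_inj ->; rewrite eqxx.
  have clB : closed e (mem B).
    move=> u w euw; apply/idP/idP; first exact: cl1.
    by apply: cl1; rewrite esym.
  have allB : forall y, y \in B.
    move=> y; rewrite -(closed_connect clB (conn x0 y)).
    by rewrite !inE eqxx.
  have : #|V| <= 2.
    apply: leq_trans (_ : #|B| <= 2); last by rewrite cards2; case: (_ != _).
    by apply: subset_leq_card; apply/subsetP => y _; apply: allB.
  by rewrite leqNgt V3.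
exists z => //; split; split=> // x Sx.
  exact: stab_prime pz (nfV x).
exact: stab_prime pz (zfix x Sx).
Qed.
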